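(* Let $N$ be a fuzzy negation and let $D_\top$ be the greatest disjunctor, $D_\top(0,0)=0$ and $D_\top(x,y)=1$ otherwise. Then the $(A,N)$-implication $I_{D_\top,N}(x,y)=D_\top(N(x),y)$ does not satisfy (A5) with any aggregation function.
   Context: Aggregation function: $A:[0,1]^2\to[0,1]$ non-decreasing in each variable with $A(0,0)=0$, $A(1,1)=1$. Fuzzy negation: non-increasing $N:[0,1]\to[0,1]$ with $N(0)=1$, $N(1)=0$. A fuzzy set on a nonempty set $U$ is a map $U\to[0,1]$, normal if it attains $1$. ''$I$ satisfies (A5) with $A$'': for all nonempty sets $U,V$, all normal fuzzy sets $D$ on $U$, $B$ on $V$ and every $y\in V$, $\sup_{x\in U}A(D(x),I(D(x),B(y)))=B(y)$. *)

(* Defs.v *)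
From Stdlib Require Import Reals.
Open Scope R_scope.

Definition in01 (x : R) : Prop := 0 <= x <= 1.

(* Aggregation function A : [0,1]^2 -> [0,1], non-decreasing in each variable,
   A(0,0)=0, A(1,1)=1.  Represented as R -> R -> R; only values on [0,1] matter. *)
Definition aggregation_function (A : R -> R -> R) : Prop :=
  (forall x y, in01 x -> in01 y -> in01 (A x y)) /\
  (forall x1 x2 y, in01 x1 -> in01 x2 -> in01 y -> x1 <= x2 -> A x1 y <= A x2 y) /\
  (forall x y1 y2, in01 x -> in01 y1 -> in01 y2 -> y1 <= y2 -> A x y1 <= A x y2) /\
  A 0 0 = 0 /\ A 1 1 = 1.

Definition fuzzy_negation (N : R -> R) : Prop :=
  (forall x, in01 x -> in01 (N x)) /\
  (forall x y, in01 x -> in01 y -> x <= y -> N y <= N x) /\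
  N 0 = 1 /\ N 1 = 0.

Definition fuzzy_set {U : Type} (D : U -> R) : Prop := forall u, in01 (D u).
Definition normal_fuzzy_set {U : Type} (D : U -> R) : Prop :=
  fuzzy_set D /\ exists u, D u = 1.

Definition D_top (x y : R) : R :=
  if Req_EM_T x 0 then (if Req_EM_T y 0 then 0 else 1) else 1.

Definition I_DN (N : R -> R) (x y : R) : R := D_top (N x) y.

(* I satisfies (A5) with A: for all nonempty U, V, normal fuzzy sets D on U, B on V
   and every y in V, sup_{x in U} A(D x, I(D x, B y)) = B y.
   The supremum equation is written as "B y is the least upper bound". *)
Definition satisfies_A5 (I A : R -> R -> R) : Prop :=
  forall (U V : Type) (D : U -> R) (B : V -> R),
    inhabited U -> inhabited V ->
    normal_fuzzy_set D -> normal_fuzzy_set B ->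
    forall y : V,
      is_lub (fun z => exists x : U, z = A (D x) (I (D x) (B y))) (B y).

(* Main.v *)
Require Import Defs.
From Stdlib Require Import Reals Lra.
Open Scope R_scope.

Theorem proposition4p11 :
  forall N : R -> R, fuzzy_negation N ->
  forall A : R -> R -> R, aggregation_function A ->
  ~ satisfies_A5 (I_DN N) A.
Proof.
  intros N HN A HA H.
  destruct HN as [_ [_ [_ N1]]].
  destruct HA as [_ [_ [_ [_ A11]]]].
  assert (Hn1 : normal_fuzzy_set (fun _ : unit => 1)).
  { split. intro; unfold in01; lra. exists tt; reflexivity. }
  assert (Hn2 : normal_fuzzy_set (fun b : bool => if b then 1 else /2)).
  { split. intros [|]; unfold in01; lra. exists true; reflexivity. }
  destruct (H unit bool _ _ (inhabits tt) (inhabits true) Hn1 Hn2 false) as [Hub _].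
  assert (Hle := Hub (A 1 (I_DN N 1 (/2))) (ex_intro _ tt eq_refl)).
  unfold I_DN, D_top in Hle. rewrite N1 in Hle.
  destruct (Req_EM_T 0 0) as [_|c]; [|lra].
  destruct (Req_EM_T (/2) 0) as [e|_]; [lra|].
  rewrite A11 in Hle. lra.
Qed.
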